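(* Let $c\in\mathbb{N}$ and let $\pi$ be a $c$-witness. Then there exists a $c$-witness $\pi'$ such that either $\mathrm{cost}_1(\pi')=+\infty$ or $\mathrm{cost}_1(\pi')\le 2|V|W$.
   Context: Reachability game with one-player environment: a finite set $V$ of vertices, edges $E\subseteq V\times V$ (each vertex has a successor), initial vertex $v_0$, two players $0$ and $1$ owning a partition $V_0\uplus V_1$ of $V$, weight functions $w_0,w_1:E\to\mathbb{N}$, $W=\max\{w_i(e)\mid e\in E, i\in\{0,1\}\}$, and target sets $T_0,T_1\subseteq V$. For a play (infinite path) $\pi$, $\mathrm{cost}_i(\pi)$ is the sum of $w_i$ over the edges of the shortest prefix of $\pi$ ending in $T_i$, and $+\infty$ if none. A strategy of player $i$ maps each finite path ending in $V_i$ to a successor of its last vertex. A deviation of a play $\pi$ is a finite path $hv$ ($v\in V$) such that $h$ is a nonempty prefix of $\pi$ but $hv$ is not. A $c$-witness is a play $\pi$ from $v_0$ such that $\mathrm{cost}_0(\pi)\le c$ and, with $d=\mathrm{cost}_1(\pi)$, for every deviation $hv$ of $\pi$, player $0$ has a strategy from $v$ in the two-player zero-sum game (player $0$ against player $1$) such that every play $\pi'$ starting at $v$ consistent with it satisfies $\mathrm{cost}_0(h\pi')\le c$ or $\mathrm{cost}_1(h\pi')>d$. *)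

(* Defs.v *)
From mathcomp Require Import all_boot.
From Stdlib Require Import ClassicalEpsilon.

Set Implicit Arguments.
Unset Strict Implicit.
Unset Printing Implicit Defensive.

Section Game.
Variable V : finType.

Definition is_play (E : rel V) (p : nat -> V) : Prop :=
  forall n, E (p n) (p n.+1).

Definition hit_time (T : {set V}) (p : nat -> V) : option nat :=
  match excluded_middle_informative (exists k, p k \in T) with
  | left H => Some (@ex_minn (fun k => p k \in T) H)
  | right _ => None
  end.

(* cost: weight of the shortest prefix ending in T; None = +infinity *)
Definition cost (w : V -> V -> nat) (T : {set V}) (p : nat -> V) : option nat :=
  omap (fun k => \sum_(j < k) w (p j) (p j.+1)) (hit_time T p).

Definition ole (x : option nat) (c : nat) : Prop :=
  if x is Some n then n <= c else False.

Definition ogt (x y : option nat) : Prop :=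
  match y with
  | None => False
  | Some m => match x with None => True | Some n => m < n end
  end.

Definition concat_play (k : nat) (p q : nat -> V) : nat -> V :=
  fun n => if n < k then p n else q (n - k).

(* strategy of player 0: sigma x s is the choice after the finite path x :: s *)
Definition strategy_valid (E : rel V) (V0 : {set V}) (sigma : V -> seq V -> V) : Prop :=
  forall x s, path E x s -> last x s \in V0 -> E (last x s) (sigma x s).

Definition consistent (E : rel V) (V0 : {set V}) (sigma : V -> seq V -> V)
  (v : V) (q : nat -> V) : Prop :=
  [/\ q 0 = v, is_play E q &
      forall n, q n \in V0 -> q n.+1 = sigma (q 0) [seq q i | i <- iota 1 n]].

(* c-witness. A deviation h v of p is given by k >= 1 (h = p 0 .. p (k-1)),
   with E (p (k-1)) v (h v is a finite path) and v <> p k (h v not a prefix). *)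
Definition witness (E : rel V) (V0 : {set V}) (w0 w1 : V -> V -> nat)
  (T0 T1 : {set V}) (v0 : V) (c : nat) (p : nat -> V) : Prop :=
  [/\ p 0 = v0, is_play E p, ole (cost w0 T0 p) c &
   forall k v, 0 < k -> E (p k.-1) v -> v != p k ->
     exists sigma, strategy_valid E V0 sigma /\
       forall q, consistent E V0 sigma v q ->
         ole (cost w0 T0 (concat_play k p q)) c \/
         ogt (cost w1 T1 (concat_play k p q)) (cost w1 T1 p)].

Definition maxW (E : rel V) (w0 w1 : V -> V -> nat) : nat :=
  \max_(e : V * V | E e.1 e.2) maxn (w0 e.1 e.2) (w1 e.1 e.2).

End Game.

(* Main.v *)
Require Import Defs.
From mathcomp Require Import all_boot zify.
From Stdlib Require Import FunctionalExtensionality Lia ClassicalEpsilon.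

Set Implicit Arguments.
Unset Strict Implicit.
Unset Printing Implicit Defensive.

Definition cutp (V : Type) (i s : nat) (P : nat -> V) (n : nat) : V :=
  if n <= i then P n else P (n + s).

Definition ps (V : Type) (w : V -> V -> nat) (P : nat -> V) (k : nat) : nat :=
  \sum_(j < k) w (P j) (P j.+1).

Section Aux.
Variable V : finType.
Implicit Types (P p q : nat -> V) (T : {set V}) (w : V -> V -> nat).

Lemma psS w P k : ps w P k.+1 = ps w P k + w (P k) (P k.+1).
Proof. by rewrite /ps big_ord_recr. Qed.

Lemma ps0 w P : ps w P 0 = 0.
Proof. by rewrite /ps big_ord0. Qed.

Lemma ps_ext w P Q k : (forall m, m <= k -> P m = Q m) -> ps w P k = ps w Q k.
Proof.
elim: k => [|k IH] H; first by rewrite !ps0.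
rewrite !psS IH; last by move=> m Hm; apply: H; lia.
by rewrite (H k) ?(H k.+1).
Qed.

Lemma ps_mono w P m n : m <= n -> ps w P m <= ps w P n.
Proof.
elim: n => [|n IH] H; first by move: H; rewrite leqn0 => /eqP ->.
rewrite psS; case: (ltnP m n.+1) => Hm.
  have := IH Hm; lia.
have E : m = n.+1 by lia.
by rewrite E psS.
Qed.

Lemma cut_ge P i s n : P i = P (i + s) -> i <= n -> cutp i s P n = P (n + s).
Proof.
move=> Hi Hn; rewrite /cutp; case: ifP => // H.
by have -> : n = i by lia.
Qed.

Lemma ps_cut w P i s : P i = P (i + s) -> forall t,
  ps w (cutp i s P) (i.+1 + t) + ps w P (i + s) = ps w P (i + s + 1 + t) + ps w P i.
Proof.
move=> Hi; elim => [|t IH].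
  rewrite (_ : i + s + 1 + 0 = (i + s).+1); last lia.
  rewrite addn0.
  rewrite [ps w _ i.+1]psS [ps w P (i + s).+1]psS (ps_ext w (Q := P)); last first.
    by move=> m Hm; rewrite /cutp Hm.
  rewrite /cutp leqnn ltnn addSn -Hi; lia.
rewrite addnS psS (addnS _ t) psS.
rewrite !cut_ge //; try lia.
have -> : i.+1 + t + s = i + s + 1 + t by lia.
have -> : (i + s + 1 + t).+1 = (i.+1 + t).+1 + s by lia.
lia.
Qed.

Lemma hitP T P h : P h \in T -> (forall m, m < h -> P m \notin T) -> hit_time T P = Some h.
Proof.
move=> Hh Hm; rewrite /hit_time; case: excluded_middle_informative => [ex|n]; last first.
  by exfalso; apply: n; exists h.
congr Some; case: ex_minnP => m Pm Hmin.
have := Hmin h Hh.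
case: (ltnP m h) => [/Hm|]; first by rewrite Pm.
lia.
Qed.

Lemma hitN T P : (forall k, P k \notin T) -> hit_time T P = None.
Proof.
move=> H; rewrite /hit_time; case: excluded_middle_informative => // -[k Hk].
by move: (H k); rewrite Hk.
Qed.

Lemma hit_cases T P : (hit_time T P = None /\ forall k, P k \notin T) \/
  exists h, [/\ hit_time T P = Some h, P h \in T & forall m, m < h -> P m \notin T].
Proof.
case: (excluded_middle_informative (exists k, P k \in T)) => [ex|nex].
  right; case: (ex_minnP ex) => h Ph Hmin; exists h; split => //.
    by apply: hitP => // m Hm; apply/negP => /Hmin; lia.
  by move=> m Hm; apply/negP => /Hmin; lia.
left.
have HN : forall k, P k \notin T.
  by move=> k; apply/negP => Hk; apply: nex; exists k.
by split => //; apply: hitN.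
Qed.
End Aux.

Section Aux2.
Variable V : finType.
Implicit Types (P p q : nat -> V) (T : {set V}) (w : V -> V -> nat).

Definition good T P i s := forall h, hit_time T P = Some h -> h <= i \/ i + s < h.

Lemma hit_cut_lo T P i s h : hit_time T P = Some h -> h <= i ->
  hit_time T (cutp i s P) = Some h.
Proof.
move=> H hi; case: (hit_cases T P) => [[]|[h' [H' Ph Hm]]]; first by rewrite H.
move: H; rewrite H' => -[E]; subst h'.
apply: hitP; first by rewrite /cutp hi.
by move=> m Hm'; rewrite /cutp (_ : m <= i); [apply: Hm | lia].
Qed.

Lemma hit_cut_hi T P i s h : P i = P (i + s) -> hit_time T P = Some h -> i + s < h ->
  hit_time T (cutp i s P) = Some (h - s).
Proof.
move=> Hi H hi; case: (hit_cases T P) => [[]|[h' [H' Ph Hm]]]; first by rewrite H.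
move: H; rewrite H' => -[E]; subst h'.
apply: hitP => [|m Hm']; first by rewrite cut_ge //; [rewrite subnK //; lia | lia].
rewrite /cutp; case: ifP => _; apply: Hm; lia.
Qed.

Lemma hit_cut_none T P i s : hit_time T P = None -> hit_time T (cutp i s P) = None.
Proof.
move=> H; case: (hit_cases T P) => [[_ HN]|[h' [H' _ _]]]; last by rewrite H in H'.
by apply: hitN => k; rewrite /cutp; case: ifP.
Qed.

Lemma cost_cut_lo w T P i s h : hit_time T P = Some h -> h <= i ->
  cost w T (cutp i s P) = cost w T P.
Proof.
move=> H hi; rewrite /cost (hit_cut_lo s H hi) H /=; congr Some.
change (ps w (cutp i s P) h = ps w P h).
by apply: ps_ext => m Hm; rewrite /cutp (_ : m <= i) //; lia.
Qed.

Lemma cost_cut_hi w T P i s h : P i = P (i + s) -> hit_time T P = Some h -> i + s < h ->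
  exists x, cost w T (cutp i s P) = Some x /\ cost w T P = Some (ps w P h) /\
    x + ps w P (i + s) = ps w P h + ps w P i.
Proof.
move=> Hi H hi; rewrite /cost (hit_cut_hi Hi H hi) H /=.
eexists; split; first reflexivity; split => //.
have := ps_cut w Hi (h - s - i.+1).
rewrite (_ : i.+1 + (h - s - i.+1) = h - s); last lia.
by rewrite (_ : i + s + 1 + (h - s - i.+1) = h); last lia.
Qed.

Lemma cut_ole w T P i s c : P i = P (i + s) -> good T P i s ->
  ole (cost w T P) c -> ole (cost w T (cutp i s P)) c.
Proof.
move=> Hi G; case: (hit_cases T P) => [[H _]|[h [H _ _]]].
  by rewrite /cost H.
case: (G h H) => hi.
  by rewrite (cost_cut_lo _ _ H hi).
have [x [-> [-> E]]] := cost_cut_hi w Hi H hi.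
have := ps_mono w P (_ : i <= i + s); rewrite /=; lia.
Qed.

Lemma cut_ogt w T P i s X : P i = P (i + s) -> good T P i s ->
  ogt X (cost w T P) -> ogt X (cost w T (cutp i s P)).
Proof.
move=> Hi G; case: (hit_cases T P) => [[H _]|[h [H _ _]]].
  by rewrite /cost H.
case: (G h H) => hi.
  by rewrite (cost_cut_lo _ _ H hi).
have [x [-> [-> E]]] := cost_cut_hi w Hi H hi.
have := ps_mono w P (_ : i <= i + s).
case: X => //= n; lia.
Qed.

Lemma good_agree T P p i s : (forall m, m <= i + s -> P m = p m) -> good T p i s -> good T P i s.
Proof.
move=> A G h H.
case: (leqP h i) => hi; first by left.
case: (leqP h (i + s)) => hj; last by right.
exfalso.
case: (hit_cases T P) => [[H' _]|[h' [H' Ph Hm]]]; first by rewrite H in H'.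
move: H; rewrite H' => -[E]; subst h'.
have : hit_time T p = Some h.
  apply: hitP; first by rewrite -A.
  by move=> m Hm'; rewrite -A; [apply: Hm | lia].
move/G; lia.
Qed.

Lemma pigeon (f : nat -> V) a n : #|V| < n ->
  exists i j, [/\ a <= i, i < j, j < a + n & f i = f j].
Proof.
move=> Hn.
have : ~~ uniq (map f (iota a n)).
  apply/negP => /card_uniqP; rewrite size_map size_iota => Ec.
  have := max_card (mem (map f (iota a n))); rewrite [X in X <= _]Ec; lia.
case/(uniqPn (f a)) => i [j [ij]]; rewrite size_map size_iota => jn.
rewrite (nth_map a) ?size_iota; last lia.
rewrite (nth_map a) ?size_iota; last lia.
rewrite !nth_iota; try lia.
move=> E; exists (a + i), (a + j); split => //; lia.
Qed.

Lemma ps_bound E w0 w1 P k : is_play E P -> ps w1 P k <= k * maxW E w0 w1.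
Proof.
move=> Hp; elim: k => [|k IH]; first by rewrite ps0.
rewrite psS mulSn addnC leq_add //.
apply: leq_trans (leq_maxr (w0 (P k) (P k.+1)) _) _.
rewrite /maxW.
exact: (@leq_bigmax_cond _ (fun e : V * V => E e.1 e.2) (fun e : V * V => maxn (w0 e.1 e.2) (w1 e.1 e.2)) (P k, P k.+1) (Hp k)).
Qed.
End Aux2.

Lemma witness_cut (V : finType) (E : rel V) V0 w0 w1 (T0 T1 : {set V}) v0 c p i s :
  witness E V0 w0 w1 T0 T1 v0 c p -> p i = p (i + s) -> good T0 p i s -> good T1 p i s ->
  witness E V0 w0 w1 T0 T1 v0 c (cutp i s p).
Proof.
case=> p0 pl ole0 dev Hi G0 G1; split.
- by rewrite /cutp leq0n.
- move=> n; case: (ltnP n i) => hn.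
    by rewrite /cutp (ltnW hn) hn; exact: pl.
  rewrite !cut_ge //; try lia.
- exact: cut_ole.
- move=> k v k0 Ek vk.
  case: (leqP k i) => hk.
  + have Ek' : E (p k.-1) v by move: Ek; rewrite /cutp (_ : k.-1 <= i) //; lia.
    have vk' : v != p k by move: vk; rewrite /cutp hk.
    have [sigma [sv Hq]] := dev k v k0 Ek' vk'.
    exists sigma; split => // q Cq.
    have -> : concat_play k (cutp i s p) q = concat_play k p q.
      apply: functional_extensionality => n; rewrite /concat_play /cutp.
      case: ifP => // nk; rewrite (_ : n <= i) //; lia.
    case: (Hq q Cq) => [H|H]; [by left | right].
    exact: cut_ogt.
  + have Ek' : E (p (k + s).-1) v.
      move: Ek; rewrite cut_ge //; last lia.
      by rewrite (_ : k.-1 + s = (k + s).-1) //; lia.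
    have vk' : v != p (k + s) by move: vk; rewrite cut_ge //; lia.
    have ks : 0 < k + s by lia.
    have [sigma [sv Hq]] := dev (k + s) v ks Ek' vk'.
    exists sigma; split => // q Cq.
    set Pq := concat_play (k + s) p q.
    have A : forall m, m <= i + s -> Pq m = p m.
      by move=> m Hm; rewrite /Pq /concat_play (_ : m < k + s) //; lia.
    have HiP : Pq i = Pq (i + s) by rewrite !A //; lia.
    have GP0 := good_agree A G0.
    have GP1 := good_agree A G1.
    have -> : concat_play k (cutp i s p) q = cutp i s Pq.
      apply: functional_extensionality => n; rewrite /concat_play /cutp /Pq /concat_play.
      by repeat case: ifP => ?; first [reflexivity | (congr q; lia) | lia].
    case: (Hq q Cq) => [H|H]; [left; exact: cut_ole | right].
    case: (hit_cases T1 p) => [[H1 _]|[h [H1 Ph Hm]]].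
      by move: H; rewrite /cost H1.
    case: (G1 h H1) => hi.
      have HP : hit_time T1 Pq = Some h.
        apply: hitP => [|m Hm']; first by rewrite A //; lia.
        by rewrite A; [apply: Hm | lia].
      by rewrite (cost_cut_lo w1 s HP hi) (cost_cut_lo w1 s H1 hi).
    have [x' [-> [Ep Ex']]] := cost_cut_hi w1 Hi H1 hi.
    move: H; rewrite Ep.
    case: (hit_cases T1 Pq) => [[HP _]|[hP [HP PhP HmP]]].
      by move=> _; rewrite /cost (hit_cut_none i s HP).
    case: (GP1 hP HP) => hi'.
      have hh : hP < h by lia.
      exfalso; move: (Hm hP hh); rewrite -A; [by rewrite PhP | lia].
    have [x [-> [EP Ex]]] := cost_cut_hi w1 HiP HP hi'.
    rewrite EP /=.
    rewrite (ps_ext w1 (P := Pq) (Q := p) (k := i + s)) // in Ex.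
    rewrite (ps_ext w1 (P := Pq) (Q := p) (k := i)) in Ex; last by move=> m Hm'; apply: A; lia.
    lia.
Qed.

Lemma reduce (V : finType) (E : rel V) V0 w0 w1 (T0 T1 : {set V}) v0 c :
  forall n p, witness E V0 w0 w1 T0 T1 v0 c p -> hit_time T1 p = Some n ->
  exists p', witness E V0 w0 w1 T0 T1 v0 c p' /\
    exists n', hit_time T1 p' = Some n' /\ n' <= 2 * #|V|.
Proof.
elim/ltn_ind => n IH p W Hn.
case: (leqP n (2 * #|V|)) => big; first by exists p; split => //; exists n.
have W' := W; case: W' => _ _ ole0 _.
have [k0 H0] : exists k0, hit_time T0 p = Some k0.
  by move: ole0; rewrite /cost; case: (hit_time T0 p) => //= k0 _; exists k0.
have cutstep : forall i j, i < j -> j < n -> p i = p j -> good T0 p i (j - i) ->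
    exists p', witness E V0 w0 w1 T0 T1 v0 c p' /\
      exists n', hit_time T1 p' = Some n' /\ n' <= 2 * #|V|.
  move=> i j ij jn pij G0.
  have G1 : good T1 p i (j - i) by move=> h; rewrite Hn => -[<-]; right; lia.
  have Hi : p i = p (i + (j - i)) by rewrite subnKC // ltnW.
  apply: (IH (n - (j - i)) _ (cutp i (j - i) p)); first lia.
    exact: witness_cut.
  apply: (hit_cut_hi Hi Hn); lia.
case: (ltnP #|V| (minn k0 n)) => hm.
  have [i [j [_ ij jm pij]]] := pigeon p 0 hm.
  apply: (cutstep i j) => //; first lia.
  by move=> h; rewrite H0 => -[<-]; right; lia.
have hm' : #|V| < n - k0 by lia.
have [i [j [ki ij jm pij]]] := pigeon p k0 hm'.
apply: (cutstep i j) => //; first lia.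
by move=> h; rewrite H0 => -[<-]; left.
Qed.

Theorem lemma28 (V : finType) (E : rel V) (Esucc : forall v, exists v', E v v')
  (V0 : {set V}) (v0 : V) (w0 w1 : V -> V -> nat) (T0 T1 : {set V})
  (c : nat) (p : nat -> V) :
  witness E V0 w0 w1 T0 T1 v0 c p ->
  exists p', witness E V0 w0 w1 T0 T1 v0 c p' /\
    (cost w1 T1 p' = None \/ ole (cost w1 T1 p') (2 * #|V| * maxW E w0 w1)).
Proof.
move=> W; case: (hit_cases T1 p) => [[H _]|[n [H _ _]]].
  by exists p; split => //; left; rewrite /cost H.
have [p' [W' [n' [H' Hn']]]] := reduce W H.
exists p'; split => //; right; rewrite /cost H' /=.
change (ps w1 p' n' <= 2 * #|V| * maxW E w0 w1).
case: W' => _ pl _ _.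
apply: leq_trans (ps_bound w0 w1 n' pl) _.
by rewrite leq_mul2r Hn' orbT.
Qed.
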